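(* Let $A$ be a $d\times d$ $\{0,1\}$-matrix defining a one-sided subshift of finite type, and $\mathbb{F}\in\{\mathbb{R},\mathbb{C}\}$. Let $\iota:NonN(A,\mathbb{F}^d)\to\varprojlim(\mathbb{F}^d,A)$, $\iota(v)=(v,B v,B^2v,\dots)$ where $B$ is the inverse of the restriction of $A$ to $NonN(A,\mathbb{F}^d)$, and let $\kappa:\varprojlim(\mathbb{F}^d,A)\to\mathcal{STAF}(A)$ send a thread $(\vec v_0,\vec v_1,\dots)$ to the staf $K$ with $K(s_0\dots s_{n-1}j)=(\vec v_n)_j$. Then $\iota$ and $\kappa$ are isomorphisms and $A^*\circ\iota=\iota\circ A$, $\sigma^*\circ\kappa=\kappa\circ A^*$. Hence eigen- and generalized eigen-objects of $A$, $A^*$ and $\sigma^*$ correspond. In particular an eigen-staf $K_\mu$ with factor $\mu$ corresponds to a thread $(v^{(0)},v^{(1)},\dots)$ with $v^{(0)}$ a right eigenvector of $A$ with eigenvalue $\mu$ and $v^{(n)}=\mu^{-n}v^{(0)}$, so that $K_\mu(s_0\dots s_{n-1}j)=\mu^{-n}(v^{(0)})_j$; similarly generalized eigen-stafs correspond to generalized eigenvectors of $A$.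
   Context: Symbols are $\{1,\dots,d\}$; $i\to j$ allowable iff $A_{ij}=1$; allowable blocks are words with all consecutive transitions allowable; $\mathcal{B}(A)$ is the set of them. A staf is $K:\mathcal{B}(A)\to\mathbb{F}$ which is additive ($K(bj)=\sum_{k:\,j\to k}K(bjk)$ for every allowable block $bj$) and coherent (values on allowable blocks of equal length ending in the same symbol agree); $\mathcal{STAF}(A)$ is their vector space. A thread is $(\vec v_0,\vec v_1,\dots)$ in $\mathbb{F}^d$ with $\vec v_n=A\vec v_{n+1}$; $\varprojlim(\mathbb{F}^d,A)$ is the space of threads, and $A^*(\vec v_0,\vec v_1,\dots)=(A\vec v_0,A\vec v_1,\dots)=(A\vec v_0,\vec v_0,\vec v_1,\dots)$. $NonN(A,\mathbb{F}^d)$ is the sum of generalized eigenspaces of $A$ for nonzero eigenvalues. The co-action $\sigma^*$ on stafs: $(\sigma^*K)(b)=K(\sigma(b))$ for blocks $b$ of length $>1$, where $\sigma(b)$ deletes the first symbol of $b$, and $(\sigma^*K)(j)=\sum_{k:\,j\to k}K(k)$ for a single symbol $j$. An eigen-staf with factor $\mu$ is a nonzero $K$ with $\sigma^*K=\mu K$. *)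

(* Defs.v *)
From HB Require Import structures.
From mathcomp Require Import all_boot all_order all_algebra.
Set Implicit Arguments. Unset Strict Implicit. Unset Printing Implicit Defensive.
Import Order.TTheory GRing.Theory Num.Theory.
Local Open Scope ring_scope.

Section SFT.
Variables (F : fieldType) (d : nat) (A : 'M[F]_d).

Definition allowed (i j : 'I_d) : bool := A i j == 1.

Definition allowable (s : seq 'I_d) : bool :=
  (0 < size s)%N && sorted allowed s.

(* A staf is a function on blocks; only its values on allowable blocks matter. *)
Definition staf_additive (K : seq 'I_d -> F) : Prop :=
  forall (b : seq 'I_d) (j : 'I_d), allowable (rcons b j) ->
    K (rcons b j) = \sum_(k | allowed j k) K (rcons (rcons b j) k).

Definition staf_coherent (K : seq 'I_d -> F) : Prop :=
  forall (b c : seq 'I_d) (j : 'I_d),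
    allowable (rcons b j) -> allowable (rcons c j) -> size b = size c ->
    K (rcons b j) = K (rcons c j).

Definition is_staf (K : seq 'I_d -> F) : Prop :=
  staf_additive K /\ staf_coherent K.

Definition staf_eq (K K' : seq 'I_d -> F) : Prop :=
  forall s, allowable s -> K s = K' s.

Definition sigma_star (K : seq 'I_d -> F) : seq 'I_d -> F :=
  fun s => match s with
           | [::] => K [::]
           | [:: j] => \sum_(k | allowed j k) K [:: k]
           | _ :: s' => K s'
           end.

Definition eigen_staf (K : seq 'I_d -> F) (mu : F) : Prop :=
  (exists s, allowable s /\ K s != 0) /\
  staf_eq (sigma_star K) (fun s => mu * K s).

Definition sigma_shift_pow (mu : F) (k : nat) (K : seq 'I_d -> F) : seq 'I_d -> F :=
  iter k (fun L => fun s => sigma_star L s - mu * L s) K.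

Definition is_thread (v : nat -> 'cV[F]_d) : Prop :=
  forall n, v n = A *m v n.+1.

Definition Astar (v : nat -> 'cV[F]_d) : nat -> 'cV[F]_d :=
  fun n => A *m v n.

(* NonN(A, F^d): the non-nilpotent (Fitting) part of A, i.e. the sum of the
   generalized eigenspaces for nonzero eigenvalues, = range of A^d. *)
Definition NonN (v : 'cV[F]_d) : Prop :=
  exists w : 'cV[F]_d, v = A ^+ d *m w.

Definition iota_map (B : 'cV[F]_d -> 'cV[F]_d) (v : 'cV[F]_d) : nat -> 'cV[F]_d :=
  fun n => iter n B v.

Definition kappa (v : nat -> 'cV[F]_d) : seq 'I_d -> F :=
  fun s => match s with
           | [::] => 0
           | j :: s' => v (size s') (last j s') 0
           end.

End SFT.

(* Main.v *)
Require Import Defs.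
From HB Require Import structures.
From mathcomp Require Import all_boot all_order all_algebra.
Set Implicit Arguments. Unset Strict Implicit. Unset Printing Implicit Defensive.
Import Order.TTheory GRing.Theory Num.Theory.
Local Open Scope ring_scope.

Lemma allowable_rcons2 (F : fieldType) (d : nat) (A : 'M[F]_d) b i j :
  allowable A (rcons (rcons b i) j) = allowable A (rcons b i) && allowed A i j.
Proof.
rewrite /allowable !size_rcons /=.
case: b => [|x b] //=; first by rewrite andbT.
by rewrite rcons_path last_rcons.
Qed.

Lemma allowable1 (F : fieldType) (d : nat) (A : 'M[F]_d) j : allowable A [:: j].
Proof. by []. Qed.

Definition succS (F : fieldType) (d : nat) (A : 'M[F]_d) (U : {set 'I_d}) :=
  [set k | [exists i in U, allowed A i k]].
Definition SS (F : fieldType) (d : nat) (A : 'M[F]_d) (m : nat) :=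
  iter m (succS A) setT.

Lemma succS_mono (F : fieldType) (d : nat) (A : 'M[F]_d) (U V : {set 'I_d}) :
  U \subset V -> succS A U \subset succS A V.
Proof.
move=> /subsetP UV; apply/subsetP => k; rewrite !inE => /existsP [i /andP [iU ik]].
by apply/existsP; exists i; rewrite UV.
Qed.

Lemma SS_decr (F : fieldType) (d : nat) (A : 'M[F]_d) m :
  SS A m.+1 \subset SS A m.
Proof.
elim: m => [|m IH]; first exact: subsetT.
exact: succS_mono.
Qed.

Lemma SS_decr_le (F : fieldType) (d : nat) (A : 'M[F]_d) m n :
  (m <= n)%N -> SS A n \subset SS A m.
Proof.
move/subnK <-; elim: (n - m)%N => [|p IH] //.
by rewrite addSn; apply: subset_trans IH; apply: SS_decr.
Qed.

Lemma SS_stable (F : fieldType) (d : nat) (A : 'M[F]_d) m p :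
  SS A m = SS A m.+1 -> SS A (p + m) = SS A m.
Proof.
move=> E; elim: p => [|p IH] //.
by rewrite addSn -[SS A (p + m).+1]/(succS A (SS A (p + m))) IH {2}E.
Qed.

Lemma SS_exists_stable (F : fieldType) (d : nat) (A : 'M[F]_d) :
  exists2 m, (m <= d)%N & SS A m = SS A m.+1.
Proof.
case: (boolP [exists m : 'I_d.+1, SS A m == SS A m.+1]).
  by move=> /existsP [m /eqP E]; exists m => //; rewrite -ltnS ltn_ord.
move=> /existsPn N.
have key : forall m, (m <= d.+1)%N -> (#|SS A m| + m <= d)%N.
  elim=> [|m IH] Hm; first by rewrite addn0 /SS /= cardsT card_ord.
  have Hm' : (m < d.+1)%N by [].
  have ne := N (Ordinal Hm').
  have pr : SS A m.+1 \proper SS A m.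
    by rewrite properEneq SS_decr andbT eq_sym.
  have := proper_card pr; have := IH (ltnW Hm); rewrite addnS.
  move=> h1 h2; apply: leq_trans h1; by rewrite ltn_add2r.
by have := key d.+1 (leqnn _); rewrite addnS ltnNge leq_addl.
Qed.

Lemma SS_inf (F : fieldType) (d : nat) (A : 'M[F]_d) L :
  SS A d \subset SS A L.
Proof.
have [m md E] := SS_exists_stable A.
case: (leqP L d) => [Ld|dL]; first exact: SS_decr_le.
have e1 := SS_stable (L - m) E; have e2 := SS_stable (d - m) E.
by rewrite subnK in e1 => //; [rewrite subnK in e2 => //; rewrite e1 e2
  | apply: leq_trans md (ltnW dL)].
Qed.

Lemma SS_of_allowable (F : fieldType) (d : nat) (A : 'M[F]_d) b j :
  allowable A (rcons b j) -> j \in SS A (size b).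
Proof.
elim/last_ind: b j => [|b i IH] j; first by rewrite /SS /= inE.
rewrite allowable_rcons2 size_rcons => /andP [H1 H2].
rewrite /SS /= inE; apply/existsP; exists i; rewrite H2 andbT; exact: IH.
Qed.

Fixpoint blk (F : fieldType) (d : nat) (A : 'M[F]_d) (m : nat) (k : 'I_d) : seq 'I_d :=
  match m with
  | 0 => [::]
  | m'.+1 => match [pick i in SS A m' | allowed A i k] with
             | Some i => rcons (blk A m' i) i
             | None => [::] end
  end.

Lemma blkP (F : fieldType) (d : nat) (A : 'M[F]_d) m k :
  k \in SS A m -> size (blk A m k) = m /\ allowable A (rcons (blk A m k) k).
Proof.
elim: m k => [|m IH] k; first by [].
rewrite /SS /= inE => /existsP [i0 /andP [i0S i0k]].
case: pickP => [i /andP [iS ik] | none].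
  have [h1 h2] := IH i iS.
  by rewrite size_rcons h1 allowable_rcons2 h2 ik.
by have := none i0; rewrite i0S i0k.
Qed.

Lemma mulA_sum (F : fieldType) (d : nat) (A : 'M[F]_d)
  (A01 : forall i j, A i j = 0 \/ A i j = 1) (x : 'cV[F]_d) j :
  (A *m x) j 0 = \sum_(k | allowed A j k) x k 0.
Proof.
rewrite mxE [RHS]big_mkcond /=; apply: eq_bigr => k _.
rewrite /allowed; case: (A01 j k) => ->; last by rewrite eqxx mul1r.
by rewrite eq_sym oner_eq0 mul0r.
Qed.

Lemma zero_lemma (F : fieldType) (d : nat) (A : 'M[F]_d)
  (A01 : forall i j, A i j = 0 \/ A i j = 1) m :
  forall (U : {set 'I_d}) (y : 'cV[F]_d),
  (forall k, k \in iter m (succS A) U -> y k 0 = 0) ->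
  forall j, j \in U -> (A ^+ m *m y) j 0 = 0.
Proof.
elim: m => [|m IH] U y Hy j jU; first by rewrite expr0 mul1mx; apply: Hy.
rewrite exprSr -mulmxE -mulmxA; apply: (IH U) => // k kU.
rewrite mulA_sum //; apply: big1 => l kl; apply: Hy.
by rewrite /= inE; apply/existsP; exists k; rewrite kU kl.
Qed.

Lemma thread_pow (F : fieldType) (d : nat) (A : 'M[F]_d) t :
  is_thread A t -> forall n m, t n = A ^+ m *m t (n + m)%N.
Proof.
move=> Ht n; elim=> [|m IH]; first by rewrite expr0 mul1mx addn0.
by rewrite IH Ht exprSr -mulmxE -mulmxA addnS.
Qed.

Lemma thread_zero (F : fieldType) (d : nat) (A : 'M[F]_d)
  (A01 : forall i j, A i j = 0 \/ A i j = 1) t :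
  is_thread A t -> (forall n j, j \in SS A n -> t n j 0 = 0) -> forall n, t n = 0.
Proof.
move=> Ht H n; rewrite (thread_pow Ht n d); apply/matrixP => j c.
rewrite ord1 [RHS]mxE; apply: (zero_lemma A01 (U := setT)) => // k kS.
apply: H; apply: (subsetP (SS_inf A (n + d))); exact: kS.
Qed.

Lemma kappa_rcons (F : fieldType) (d : nat) (t : nat -> 'cV[F]_d) b j :
  kappa t (rcons b j) = t (size b) j 0.
Proof. by case: b => [|x b] //=; rewrite size_rcons last_rcons. Qed.

Definition zK (F : fieldType) (d : nat) (A : 'M[F]_d) (K : seq 'I_d -> F) m : 'cV[F]_d :=
  \col_k (if k \in SS A m then K (rcons (blk A m k) k) else 0).

Lemma zK_G (F : fieldType) (d : nat) (A : 'M[F]_d)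
  (A01 : forall i j, A i j = 0 \/ A i j = 1) K :
  is_staf A K -> forall m n b j, allowable A (rcons b j) -> size b = n ->
  K (rcons b j) = (A ^+ m *m zK A K (n + m)) j 0.
Proof.
move=> [Kadd Kcoh]; elim=> [|m IH] n b j Hb Hs.
  rewrite expr0 mul1mx addn0 mxE.
  have jS : j \in SS A n by rewrite -Hs; apply: SS_of_allowable.
  rewrite jS; have [h1 h2] := blkP jS; apply: Kcoh => //; by rewrite h1.
rewrite exprS -mulmxE -mulmxA mulA_sum // Kadd //; apply: eq_bigr => k jk.
rewrite -addSnnS; apply: IH; first by rewrite allowable_rcons2 Hb jk.
by rewrite size_rcons Hs.
Qed.

Definition tK (F : fieldType) (d : nat) (A : 'M[F]_d) (K : seq 'I_d -> F) n : 'cV[F]_d :=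
  A ^+ d *m zK A K (n + d).

Lemma tK_thread (F : fieldType) (d : nat) (A : 'M[F]_d)
  (A01 : forall i j, A i j = 0 \/ A i j = 1) K :
  is_staf A K -> is_thread A (tK A K).
Proof.
move=> HK n; rewrite /tK mulmxA mulmxE -exprS exprSr -mulmxE -mulmxA.
apply/eqP; rewrite -subr_eq0 -mulmxBr; apply/eqP/matrixP => j c.
rewrite ord1 [RHS]mxE; apply: (zero_lemma A01 (U := setT)) => // k kS.
have kS' : k \in SS A (n + d) by apply: (subsetP (SS_inf A (n + d))).
have [h1 h2] := blkP kS'.
rewrite !mxE kS' (zK_G A01 HK 1 h2 h1) expr1 addn1 addSn.
by rewrite [in X in X - _]mxE subrr.
Qed.

Lemma tK_kappa (F : fieldType) (d : nat) (A : 'M[F]_d)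
  (A01 : forall i j, A i j = 0 \/ A i j = 1) K :
  is_staf A K -> staf_eq A (kappa (tK A K)) K.
Proof.
move=> HK s; case/lastP: s => [|b j] // Hs.
by rewrite kappa_rcons /tK (zK_G A01 HK d Hs (erefl _)).
Qed.

Definition HBt (F : fieldType) (d : nat) (A : 'M[F]_d) (B : 'cV[F]_d -> 'cV[F]_d) :=
  forall v, NonN A v -> [/\ NonN A (B v), A *m B v = v & B (A *m v) = v].

Lemma NonN0 (F : fieldType) (d : nat) (A : 'M[F]_d) : NonN A 0.
Proof. by exists 0; rewrite mulmx0. Qed.

Lemma NonN_lin (F : fieldType) (d : nat) (A : 'M[F]_d) (a : F) v w :
  NonN A v -> NonN A w -> NonN A (a *: v + w).
Proof.
move=> [x ->] [y ->]; exists (a *: x + y).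
by rewrite mulmxDr -scalemxAr.
Qed.

Lemma NonN_A (F : fieldType) (d : nat) (A : 'M[F]_d) v :
  NonN A v -> NonN A (A *m v).
Proof.
move=> [x ->]; exists (A *m x).
by rewrite !mulmxA !mulmxE -exprS exprSr.
Qed.

Lemma B_lin (F : fieldType) (d : nat) (A : 'M[F]_d) B (HB : HBt A B) (a : F) v w :
  NonN A v -> NonN A w -> B (a *: v + w) = a *: B v + B w.
Proof.
move=> Hv Hw; have [Bv ABv _] := HB v Hv; have [Bw ABw _] := HB w Hw.
have -> : a *: v + w = A *m (a *: B v + B w) by rewrite mulmxDr -scalemxAr ABv ABw.
by have [_ _ ->] := HB _ (NonN_lin a Bv Bw).
Qed.

Lemma B0 (F : fieldType) (d : nat) (A : 'M[F]_d) B (HB : HBt A B) : B 0 = 0.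
Proof. by have [_ _] := HB 0 (NonN0 A); rewrite mulmx0. Qed.

Lemma iter_NonN (F : fieldType) (d : nat) (A : 'M[F]_d) B (HB : HBt A B) v n :
  NonN A v -> NonN A (iter n B v).
Proof. by move=> Hv; elim: n => [|n IH] //=; have [] := HB _ IH. Qed.

Lemma iota_lin (F : fieldType) (d : nat) (A : 'M[F]_d) B (HB : HBt A B) (a : F) v w :
  NonN A v -> NonN A w ->
  forall n, iota_map B (a *: v + w) n = a *: iota_map B v n + iota_map B w n.
Proof.
move=> Hv Hw; elim=> [|n IH] //; rewrite /iota_map /= -!/(iota_map B _ n) IH.
by apply: (B_lin HB); apply: (iter_NonN HB).
Qed.

Lemma iota_thread (F : fieldType) (d : nat) (A : 'M[F]_d) B (HB : HBt A B) v :
  NonN A v -> is_thread A (iota_map B v).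
Proof.
move=> Hv n; rewrite /iota_map /=.
by have [_ -> _] := HB _ (iter_NonN HB n Hv).
Qed.

Lemma thread_NonN (F : fieldType) (d : nat) (A : 'M[F]_d) t :
  is_thread A t -> forall n, NonN A (t n).
Proof. by move=> Ht n; exists (t (n + d)%N); apply: thread_pow. Qed.

Lemma thread_iota (F : fieldType) (d : nat) (A : 'M[F]_d) B (HB : HBt A B) t :
  is_thread A t -> forall n, iota_map B (t 0%N) n = t n.
Proof.
move=> Ht; elim=> [|n IH] //; rewrite /iota_map /= -/(iota_map B _ n) IH Ht.
by have [_ _ ->] := HB _ (thread_NonN Ht n.+1).
Qed.

Lemma Astar_iota (F : fieldType) (d : nat) (A : 'M[F]_d) B (HB : HBt A B) v :
  NonN A v -> forall n, A *m iota_map B v n = iota_map B (A *m v) n.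
Proof.
move=> Hv; elim=> [|n IH] //; rewrite /iota_map /= -!/(iota_map B _ n) -IH.
have Hn := iter_NonN HB n Hv.
have [_ e1 _] := HB _ Hn; rewrite e1.
by have [_ _ ->] := HB _ Hn.
Qed.

Lemma kappa_staf (F : fieldType) (d : nat) (A : 'M[F]_d)
  (A01 : forall i j, A i j = 0 \/ A i j = 1) t :
  is_thread A t -> is_staf A (kappa t).
Proof.
move=> Ht; split.
  move=> b j _; rewrite kappa_rcons Ht mulA_sum //; apply: eq_bigr => k _.
  by rewrite kappa_rcons size_rcons.
by move=> b c j _ _ e; rewrite !kappa_rcons e.
Qed.

Lemma kappa_lin (F : fieldType) (d : nat) (a : F) (t u : nat -> 'cV[F]_d) s :
  kappa (fun n => a *: t n + u n) s = a * kappa t s + kappa u s.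
Proof. by case: s => [|j s] /=; rewrite ?mulr0 ?addr0 // !mxE. Qed.

Lemma kappa_sub (F : fieldType) (d : nat) (mu : F) (t u : nat -> 'cV[F]_d) s :
  kappa (fun n => u n - mu *: t n) s = kappa u s - mu * kappa t s.
Proof. by case: s => [|j s] /=; rewrite ?mulr0 ?subr0 // !mxE. Qed.

Lemma kappa_ext (F : fieldType) (d : nat) (t u : nat -> 'cV[F]_d) :
  (forall n, t n = u n) -> forall s, kappa t s = kappa u s.
Proof. by move=> H [|j s] //=; rewrite H. Qed.

Lemma kappa_inj (F : fieldType) (d : nat) (A : 'M[F]_d)
  (A01 : forall i j, A i j = 0 \/ A i j = 1) t u :
  is_thread A t -> is_thread A u -> staf_eq A (kappa t) (kappa u) ->
  forall n, t n = u n.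
Proof.
move=> Ht Hu H n; apply/eqP; rewrite -subr_eq0; apply/eqP.
have Hw : is_thread A (fun n => t n - u n).
  by move=> m; rewrite mulmxBr -Ht -Hu.
apply: (thread_zero A01 Hw) => m j jS.
have [h1 h2] := blkP jS.
rewrite mxE; have := H _ h2; rewrite !kappa_rcons h1 => ->.
by rewrite mxE subrr.
Qed.

Lemma sigma_congr (F : fieldType) (d : nat) (A : 'M[F]_d) K K' :
  staf_eq A K K' -> staf_eq A (sigma_star A K) (sigma_star A K').
Proof.
move=> H [|x [|y s]] Hs //=.
  by apply: eq_bigr => k _; apply: H.
apply: H; move: Hs; rewrite /allowable /=.
by case/andP => _ ->.
Qed.

Lemma sigma_kappa (F : fieldType) (d : nat) (A : 'M[F]_d)
  (A01 : forall i j, A i j = 0 \/ A i j = 1) t :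
  is_thread A t -> staf_eq A (sigma_star A (kappa t)) (kappa (Astar A t)).
Proof.
move=> Ht [|x [|y s]] _ //=; first by rewrite mulA_sum.
by rewrite /Astar -Ht.
Qed.

Definition Tsh (F : fieldType) (d : nat) (A : 'M[F]_d) (mu : F)
  (t : nat -> 'cV[F]_d) : nat -> 'cV[F]_d :=
  fun n => Astar A t n - mu *: t n.

Lemma Tsh_thread (F : fieldType) (d : nat) (A : 'M[F]_d) mu k t :
  is_thread A t -> is_thread A (iter k (Tsh A mu) t).
Proof.
move=> Ht; elim: k => [|k IH] //= n.
by rewrite /Tsh /Astar {1 2}(IH n) mulmxBr -scalemxAr.
Qed.

Lemma shift_congr (F : fieldType) (d : nat) (A : 'M[F]_d) mu k K K' :
  staf_eq A K K' -> staf_eq A (sigma_shift_pow A mu k K) (sigma_shift_pow A mu k K').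
Proof.
move=> H; elim: k => [|k IH] //= s Hs.
by rewrite (sigma_congr IH Hs) IH.
Qed.

Lemma shift_kappa (F : fieldType) (d : nat) (A : 'M[F]_d)
  (A01 : forall i j, A i j = 0 \/ A i j = 1) mu k t :
  is_thread A t ->
  staf_eq A (sigma_shift_pow A mu k (kappa t)) (kappa (iter k (Tsh A mu) t)).
Proof.
move=> Ht; elim: k => [|k IH] //= s Hs.
rewrite (sigma_congr IH Hs) IH // (sigma_kappa A01 (Tsh_thread mu k Ht) Hs).
by rewrite /Tsh kappa_sub.
Qed.

Lemma Tsh_iota (F : fieldType) (d : nat) (A : 'M[F]_d) B (HB : HBt A B) mu v :
  NonN A v -> forall k,
  [/\ NonN A ((A - mu%:M) ^+ k *m v) &
  forall n, iter k (Tsh A mu) (iota_map B v) n = iota_map B ((A - mu%:M) ^+ k *m v) n].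
Proof.
move=> Hv; elim=> [|k [IH1 IH2]]; first by rewrite expr0 mul1mx.
have E : (A - mu%:M) ^+ k.+1 *m v = (- mu) *: ((A - mu%:M) ^+ k *m v) + A *m ((A - mu%:M) ^+ k *m v).
  rewrite exprS -mulmxE -mulmxA mulmxBl mul_scalar_mx addrC scaleNr.
  by [].
rewrite E; split; first by apply: NonN_lin => //; apply: NonN_A.
move=> n; rewrite /= /Tsh /Astar IH2 (Astar_iota HB IH1) (iota_lin HB) //.
  by rewrite scaleNr addrC.
exact: NonN_A.
Qed.

Lemma kappa_scale (F : fieldType) (d : nat) (a : F) (t : nat -> 'cV[F]_d) s :
  kappa (fun n => a *: t n) s = a * kappa t s.
Proof. by case: s => [|j s] /=; rewrite ?mulr0 // !mxE. Qed.

Lemma kappa_zero (F : fieldType) (d : nat) s :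
  kappa (fun _ : nat => (0 : 'cV[F]_d)) s = 0.
Proof. by case: s => [|j s] //=; rewrite mxE. Qed.

Lemma Tsh_ext (F : fieldType) (d : nat) (A : 'M[F]_d) mu k t u :
  (forall n, t n = u n) -> forall n, iter k (Tsh A mu) t n = iter k (Tsh A mu) u n.
Proof.
move=> H; elim: k => [|k IH] n //=.
by rewrite /Tsh /Astar IH.
Qed.

Lemma iota0 (F : fieldType) (d : nat) (A : 'M[F]_d) B (HB : HBt A B) n :
  iota_map B 0 n = 0.
Proof.
elim: n => [|n IH] //; rewrite /iota_map /= -/(iota_map B 0 n) IH.
exact: B0 HB.
Qed.

Lemma invS (F : fieldType) (mu : F) n : mu != 0 -> mu ^- n.+1 * mu = mu ^- n.
Proof. by move=> mu0; rewrite exprSr invfM -mulrA mulVf // mulr1. Qed.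

Lemma Astar_thread (F : fieldType) (d : nat) (A : 'M[F]_d) t :
  is_thread A t -> is_thread A (Astar A t).
Proof. by move=> Ht n; rewrite /Astar {1}(Ht n). Qed.

Lemma scale_thread (F : fieldType) (d : nat) (A : 'M[F]_d) (a : F) t :
  is_thread A t -> is_thread A (fun n => a *: t n).
Proof. by move=> Ht n; rewrite (Ht n) scalemxAr. Qed.

Theorem fact8p4 (F : fieldType) (d : nat) (A : 'M[F]_d)
  (A01 : forall i j, A i j = 0 \/ A i j = 1)
  (B : 'cV[F]_d -> 'cV[F]_d)
  (HB : forall v, NonN A v -> [/\ NonN A (B v), A *m B v = v & B (A *m v) = v]) :
  (* iota : NonN -> threads is a linear isomorphism *)
  [/\ forall v, NonN A v -> is_thread A (iota_map B v),
      forall (a : F) v w, NonN A v -> NonN A w ->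
        forall n, iota_map B (a *: v + w) n = a *: iota_map B v n + iota_map B w n,
      forall v w, NonN A v -> NonN A w ->
        (forall n, iota_map B v n = iota_map B w n) -> v = w
    & forall t, is_thread A t -> exists2 v, NonN A v & forall n, iota_map B v n = t n] /\
  (* kappa : threads -> STAF is a linear isomorphism *)
  [/\ forall t, is_thread A t -> is_staf A (kappa t),
      forall (a : F) t u, staf_eq A (kappa (fun n => a *: t n + u n))
                                    (fun s => a * kappa t s + kappa u s),
      forall t u, is_thread A t -> is_thread A u ->
        staf_eq A (kappa t) (kappa u) -> forall n, t n = u n
    & forall K, is_staf A K -> exists2 t, is_thread A t & staf_eq A (kappa t) K] /\
  (* intertwining relations *)
  (forall v, NonN A v -> forall n, Astar A (iota_map B v) n = iota_map B (A *m v) n) /\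
  (forall t, is_thread A t -> staf_eq A (sigma_star A (kappa t)) (kappa (Astar A t))) /\
  (* eigen-stafs <-> eigenvectors *)
  (forall (K : seq 'I_d -> F) (mu : F), is_staf A K ->
     (eigen_staf A K mu <->
      exists v0 : 'cV[F]_d, [/\ mu != 0, v0 != 0, A *m v0 = mu *: v0 &
        forall (s : seq 'I_d) (j : 'I_d), allowable A (rcons s j) ->
          K (rcons s j) = mu ^- (size s) * v0 j 0])) /\
  (* generalized eigen-stafs <-> generalized eigenvectors *)
  (forall (K : seq 'I_d -> F) (mu : F) (k : nat), is_staf A K ->
     (staf_eq A (sigma_shift_pow A mu k K) (fun _ => 0) <->
      exists2 v : 'cV[F]_d, NonN A v /\ (A - mu%:M) ^+ k *m v = 0 &
        staf_eq A K (kappa (iota_map B v)))).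
Proof.
have HB' : HBt A B by [].
split.
  split; first exact: (iota_thread HB').
  - by move=> a v w Hv Hw n; apply: (iota_lin HB').
  - by move=> v w _ _ H; apply: (H 0%N).
  - move=> t Ht; exists (t 0%N); first exact: thread_NonN.
    exact: (thread_iota HB').
split.
  split; first exact: kappa_staf.
  - by move=> a t u s _; apply: kappa_lin.
  - exact: kappa_inj.
  - move=> K HK; exists (tK A K); first exact: tK_thread.
    exact: tK_kappa.
split; first by move=> v Hv n; apply: (Astar_iota HB').
split; first exact: sigma_kappa.
split.
  move=> K mu HK; split.
    case=> [[s0 [Hs0 Ks0]] Heig].
    set t := tK A K; have Ht : is_thread A t by apply: tK_thread.
    have Hk : staf_eq A (kappa t) K by apply: tK_kappa.
    have Ast : forall n, Astar A t n = mu *: t n.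
      apply: (kappa_inj A01 (Astar_thread Ht) (scale_thread mu Ht)) => s Hs.
      rewrite kappa_scale -(sigma_kappa A01 Ht Hs) (sigma_congr Hk Hs) Heig //.
      by rewrite Hk.
    have tS : forall n, t n = mu *: t n.+1 by move=> n; rewrite {1}(Ht n) -Ast.
    have mu0 : mu != 0.
      apply/negP => /eqP mu0; move: Ks0; rewrite -Hk //.
      have -> : kappa t s0 = kappa (fun _ => 0) s0.
        by apply: kappa_ext => n; rewrite tS mu0 scale0r.
      by rewrite kappa_zero eqxx.
    have tn : forall n, t n = mu ^- n *: t 0%N.
      elim=> [|n IH]; first by rewrite expr0 invr1 scale1r.
      have -> : t n.+1 = mu^-1 *: t n by rewrite (tS n) scalerA mulVf // scale1r.
      by rewrite IH scalerA [in RHS]exprS invfM.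
    exists (t 0%N); split => //.
    - apply/negP => /eqP t00; move: Ks0; rewrite -Hk //.
      have -> : kappa t s0 = kappa (fun _ => 0) s0.
        by apply: kappa_ext => n; rewrite tn t00 scaler0.
      by rewrite kappa_zero eqxx.
    - by have := Ast 0%N.
    - move=> s j Hs; rewrite -Hk // kappa_rcons tn mxE.
      by [].
  case=> v0 [mu0 v00 Av K_eq]; split.
    have [j Hj] : exists j, v0 j 0 != 0.
      case: (boolP [exists j, v0 j 0 != 0]) => [/existsP //| /existsPn N].
      move/eqP: v00 => []; apply/matrixP => i c; rewrite ord1 mxE.
      by have := N i; rewrite negbK => /eqP.
    exists [:: j]; split => //.
    by rewrite (K_eq [::] j) // expr0 invr1 mul1r.
  pose t n := mu ^- n *: v0.
  have Ht : is_thread A t.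
    by move=> n; rewrite /t -scalemxAr Av scalerA invS.
  have Hk : staf_eq A K (kappa t).
    move=> s; case/lastP: s => [|b j] // Hs.
    by rewrite kappa_rcons K_eq // /t mxE.
  have Ast : forall n, Astar A t n = mu *: t n.
    by move=> n; rewrite /Astar /t -scalemxAr Av !scalerA mulrC.
  move=> s Hs; rewrite (sigma_congr Hk Hs) (sigma_kappa A01 Ht Hs).
  by rewrite (kappa_ext Ast) kappa_scale Hk.
move=> K mu k HK; split.
  move=> H.
  set t := tK A K; have Ht : is_thread A t by apply: tK_thread.
  have Hk : staf_eq A (kappa t) K by apply: tK_kappa.
  have Hv := thread_NonN Ht 0.
  have [Nw It] := Tsh_iota HB' mu Hv k.
  exists (t 0%N); last first.
    by move=> s Hs; rewrite -Hk // (kappa_ext (thread_iota HB' Ht)).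
  split => //.
  have Z : forall n, iter k (Tsh A mu) t n = 0.
    apply: (kappa_inj A01 (Tsh_thread mu k Ht)); first by move=> n; rewrite mulmx0.
    move=> s Hs.
    rewrite kappa_zero -(shift_kappa A01 mu k Ht Hs) (shift_congr mu k Hk Hs).
    exact: H.
  have := It 0%N; rewrite /iota_map /= => <-; rewrite -(Z 0%N).
  by apply: Tsh_ext => n; apply: (thread_iota HB').
case=> v [Hv Hz] HKv s Hs.
have [Nw It] := Tsh_iota HB' mu Hv k.
rewrite (shift_congr mu k HKv Hs) (shift_kappa A01 mu k (iota_thread HB' Hv) Hs).
rewrite (kappa_ext It) Hz (kappa_ext (iota0 HB')).
exact: kappa_zero.
Qed.
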